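(* Let $f:\mathbb{F}_{2^n}\to\mathbb{F}_{2^n}$ be APN. Then \[|\mathrm{Im}(f)|\geq\begin{cases}\frac{2^n+1}{3} & n\text{ odd},\\ \frac{2^n+2}{3} & n \text{ even}.\end{cases}\] If $n$ is odd and $|\mathrm{Im}(f)|=\frac{2^n+1}{3}$, then $\omega(y_0)=2$ for one element $y_0\in\mathrm{Im}(f)$ and $\omega(y)=3$ for all $y\in\mathrm{Im}(f)\setminus\{y_0\}$. If $n$ is even and $|\mathrm{Im}(f)|=\frac{2^n+2}{3}$, then one of the following holds: 1. $\omega(y_0)=1$ for one element $y_0\in\mathrm{Im}(f)$ and $\omega(y)=3$ for all other $y\in\mathrm{Im}(f)$ (i.e. $f$ is almost-3-to-1); 2. $\omega(y_0)=\omega(y_1)=2$ for two elements $y_0,y_1\in\mathrm{Im}(f)$ and $\omega(y)=3$ for all other $y\in\mathrm{Im}(f)$; 3. $\omega(y_0)=\omega(y_1)=\omega(y_2)=2$ for three elements $y_0,y_1,y_2\in\mathrm{Im}(f)$, $\omega(y_3)=4$ for a unique further element $y_3\in\mathrm{Im}(f)$, and $\omega(y)=3$ for all other $y\in\mathrm{Im}(f)$.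
   Context: A map $f:\mathbb{F}_{2^n}\to\mathbb{F}_{2^n}$ is APN if for every $a\neq 0$ and every $b$ the equation $f(x+a)+f(x)=b$ has at most 2 solutions. $\omega(y)=|f^{-1}(\{y\})|$. $f$ is almost-3-to-1 if there is a unique element of $\mathrm{Im}(f)$ with exactly one preimage and every other element of $\mathrm{Im}(f)$ has exactly 3 preimages. *)

(* Defs.v *)
From HB Require Import structures.
From mathcomp Require Import all_boot all_algebra all_field.
Set Implicit Arguments. Unset Strict Implicit. Unset Printing Implicit Defensive.
Import GRing.Theory.
Local Open Scope ring_scope.

(* F_{2^n} is represented by an arbitrary finite field F with #|F| = 2^n
   (unique up to isomorphism). *)

Definition APN (F : finFieldType) (f : F -> F) : Prop :=
  forall a b : F, (a != 0)%R -> (#|[set x : F | (f (x + a) + f x)%R == b]| <= 2)%N.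

Definition Im (F : finFieldType) (f : F -> F) : {set F} := f @: [set: F].

Definition omega (F : finFieldType) (f : F -> F) (y : F) : nat :=
  #|[set x : F | f x == y]|.

(* Main.v *)
Require Import Defs.
From HB Require Import structures.
From mathcomp Require Import all_boot all_algebra all_field.
From mathcomp Require Import zify.
Import GRing.Theory.

Definition Q (m : nat) := m * m + 6 - 5 * m.

Lemma Q_id m : m * m.-1 + 6 = 4 * m + Q m.
Proof.
rewrite /Q; case: (leqP m 3) => h.
  by case: m h => [|[|[|[|]]]].
case: m h => [|m] //= h.
have h2 : 4 * m <= m.+1 * m by rewrite leq_mul2r h orbT.
have e : m.+1 * m.+1 = m.+1 * m + m.+1 by rewrite mulnS addnC.
lia.
Qed.

Lemma Qcases m : (Q m = 0 /\ (m = 2 \/ m = 3)) \/ (Q m = 2 /\ (m = 1 \/ m = 4))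
  \/ 6 <= Q m.
Proof.
case: (leqP m 5) => Hm.
  by case: m Hm => [|[|[|[|[|[|m]]]]]] //= _; auto.
right; right; rewrite /Q.
have h2 : 6 * m <= m * m by rewrite leq_mul2r Hm orbT.
lia.
Qed.

Section S.
Variables (F : finFieldType) (f : F -> F).
Local Notation w := (omega f).

Lemma sum_nat_in (S : {set F}) (P : pred F) :
  \sum_(y in S) (P y : nat) = #|[set y in S | P y]|.
Proof.
rewrite -sum1_card big_mkcond [RHS]big_mkcond /=.
apply: eq_bigr => y _; rewrite !inE; by case: (y \in S); case: (P y).
Qed.

Lemma sum_nat_all (P : pred F) :
  \sum_y (P y : nat) = #|[set y | P y]|.
Proof.
rewrite -sum1dep_card [RHS]big_mkcond /=.
apply: eq_bigr => y _; by case: (P y).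
Qed.

Lemma le_sum_in (S : {set F}) (E : F -> nat) y :
  y \in S -> E y <= \sum_(z in S) E z.
Proof. by move=> Hy; rewrite (big_setD1 y) //= leq_addr. Qed.

Lemma Im_w y : y \in Im f -> 0 < w y.
Proof.
case/imsetP => x _ ->; apply/card_gt0P; exists x; by rewrite inE.
Qed.

Lemma sum_w : \sum_(y in Im f) w y = #|F|.
Proof.
symmetry; rewrite -sum1_card (partition_big f (mem (Im f))) /=; last first.
  by move=> x _; apply: imset_f.
apply: eq_big => [y|y _] //.
rewrite /omega sum1dep_card; apply: eq_card => x; by rewrite !inE.
Qed.

Lemma sum_coll : \sum_(y in Im f) w y * (w y).-1 = \sum_x (w (f x)).-1.
Proof.
rewrite [RHS](partition_big f (mem (Im f))) /=; last first.
  by move=> x _; apply: imset_f.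
apply: eq_bigr => y _ /=.
rewrite (eq_bigr (fun _ => (w y).-1)); last by move=> x /eqP->.
rewrite (eq_bigl (fun x => x \in [set x | f x == y])); last by move=> x; rewrite inE.
by rewrite sum_nat_const mulnC.
Qed.

Lemma coll_x (x : F) :
  (w (f x)).-1 = \sum_a ((a != 0%R) && (f (x + a)%R == f x) : nat).
Proof.
rewrite /omega (cardsD1 x) inE eqxx /= /=.
rewrite add0n.
rewrite -(setIidPr (subsetT ([set x0 | f x0 == f x] :\ x))).
rewrite -sum_nat_in (reindex_inj (addrI x)) /=.
apply: eq_big => a; rewrite ?inE // => _.
by rewrite -{2}[x]addr0 (inj_eq (addrI x)).
Qed.

Lemma coll_bound : (exists n, #|F| = 2 ^ n) -> APN f ->
  \sum_(y in Im f) w y * (w y).-1 <= 2 * (#|F|).-1.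
Proof.
move=> [n Hn] Hapn.
have ch2 : (2 \in [pchar F])%R by apply: (card_finPcharP Hn).
rewrite sum_coll (eq_bigr _ (fun x _ => coll_x x)) exchange_big /=.
have -> : (#|F|).-1 = \sum_(a : F) ((a != 0%R) : nat).
  rewrite sum_nat_all.
  rewrite -(cardsC1 (0%R : F)); apply: eq_card => a; by rewrite !inE.
rewrite big_distrr /=; apply: leq_sum => a _.
case: (eqVneq a 0%R) => [->|anz] /=; first by rewrite big1.
rewrite sum_nat_all.
rewrite muln1.
have := Hapn a 0%R anz.
rewrite (_ : [set x | _] = [set x : F | (f (x + a) + f x)%R == 0%R]) //.
apply/setP => x; rewrite !inE.
apply/eqP/eqP => [->|H]; first by rewrite addrr_pchar2.
by rewrite -[f x]add0r -H -addrA addrr_pchar2 // addr0.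
Qed.

Lemma sum23 (S : {set F}) : {in S, forall y, w y = 2 \/ w y = 3} ->
  \sum_(y in S) w y + #|[set y in S | w y == 2]| = 3 * #|S|.
Proof.
move=> H; rewrite -(sum_nat_in S (fun y => w y == 2)) -big_split /=.
rewrite -sum1_card big_distrr /=.
by apply: eq_bigr => y /H [->|->].
Qed.

Lemma sumQ : \sum_(y in Im f) w y * (w y).-1 + 6 * #|Im f|
   = 4 * #|F| + \sum_(y in Im f) Q (w y).
Proof.
rewrite -sum_w -sum1_card !big_distrr /= -!big_split /=.
by apply: eq_bigr => y _; rewrite muln1 Q_id.
Qed.

End S.

Lemma Q0 m : Q m = 0 -> m = 2 \/ m = 3.
Proof. case: (Qcases m) => [[_ //]|[[H _]|H]] H0; rewrite H0 in H => //. Qed.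

Lemma Q2 m : Q m != 0 -> Q m <= 2 -> Q m = 2 /\ (m = 1 \/ m = 4).
Proof.
case: (Qcases m) => [[-> _] //|[//|H]] H1 H2.
by have := leq_trans H H2.
Qed.

Lemma pow2mod n : exists m, 2 ^ n = 3 * m + (if odd n then 2 else 1).
Proof.
elim: n => [|n [m IH]]; first by exists 0.
rewrite expnS IH /=; case: (odd n) => /=.
  by exists (2 * m + 1); lia.
by exists (2 * m); lia.
Qed.
Theorem theorem4p2 (F : finFieldType) (n : nat) (f : F -> F) :
  #|F| = 2 ^ n -> APN f ->
  (* lower bound *)
  ((odd n -> 2 ^ n + 1 <= 3 * #|Im f|) /\
   (~~ odd n -> 2 ^ n + 2 <= 3 * #|Im f|)) /\
  (* equality case, n odd *)
  (odd n -> 3 * #|Im f| = 2 ^ n + 1 ->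
     exists2 y0, y0 \in Im f &
       omega f y0 = 2 /\
       (forall y, y \in Im f -> y != y0 -> omega f y = 3)) /\
  (* equality case, n even *)
  (~~ odd n -> 3 * #|Im f| = 2 ^ n + 2 ->
     (exists2 y0, y0 \in Im f &
        omega f y0 = 1 /\
        (forall y, y \in Im f -> y != y0 -> omega f y = 3)) \/
     (exists y0 y1,
        [/\ y0 \in Im f, y1 \in Im f, y0 != y1,
            omega f y0 = 2 /\ omega f y1 = 2 &
            forall y, y \in Im f -> y != y0 -> y != y1 -> omega f y = 3]) \/
     (exists y0 y1 y2 y3,
        [/\ [/\ y0 \in Im f, y1 \in Im f, y2 \in Im f & y3 \in Im f],
            uniq [:: y0; y1; y2; y3],
            [/\ omega f y0 = 2, omega f y1 = 2, omega f y2 = 2 & omega f y3 = 4] &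
            forall y, y \in Im f -> y \notin [:: y0; y1; y2; y3] ->
              omega f y = 3])).
Proof.
move=> HF Hapn.
have Hc := coll_bound F f (ex_intro _ n HF) Hapn.
have HQ := sumQ F f.
have Hw := sum_w F f.
have [m Hm] := pow2mod n.
rewrite HF in Hc HQ Hw.
have Npos : 0 < 2 ^ n by rewrite expn_gt0.
move: Hc HQ Hw.
set SQ := \sum_(y in Im f) Q (omega f y).
set SC := \sum_(y in Im f) _.
set k := #|Im f|.
move=> Hc HQ Hw.
have Hkey : 2 * 2 ^ n + 2 + SQ <= 6 * k by lia.
have allQ0 : SQ = 0 -> {in Im f, forall y, omega f y = 2 \/ omega f y = 3}.
  move=> H0 y Hy; have := le_sum_in F _ (fun y => Q (omega f y)) y Hy.
  rewrite -/SQ H0 leqn0 => /eqP HQy.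
  exact: Q0.
split; first by split => Hn; [rewrite Hn in Hm | rewrite (negbTE Hn) in Hm]; lia.
split.
  move=> Hn Hk; rewrite Hn in Hm.
  have H23 := allQ0 ltac:(lia).
  have := sum23 F f _ H23; rewrite Hw -/k => HT.
  have /cards1P [y0 Ey0] : #|[set y in Im f | omega f y == 2]| == 1 by apply/eqP; lia.
  have : y0 \in [set y in Im f | omega f y == 2] by rewrite Ey0 set11.
  rewrite inE => /andP [Hy0 /eqP Hw0].
  exists y0 => //; split => // y Hy Hne.
  case: (H23 y Hy) => // H2.
  have : y \in [set y in Im f | omega f y == 2] by rewrite inE Hy H2 eqxx.
  by rewrite Ey0 inE (negbTE Hne).
move=> Hn Hk; rewrite (negbTE Hn) in Hm.
have HSQ : SQ <= 2 by lia.
case: (pickP (fun y => (y \in Im f) && (Q (omega f y) != 0))) => [y0 /andP [Hy0 HQ0]|Hno].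
  have HS : SQ = Q (omega f y0) + \sum_(y in Im f :\ y0) Q (omega f y) by rewrite /SQ (big_setD1 y0).
  have Hw' : omega f y0 + \sum_(y in Im f :\ y0) omega f y = 2 ^ n by rewrite -(big_setD1 y0).
  have Hcard : k = 1 + #|Im f :\ y0| by rewrite /k (cardsD1 y0) Hy0.
  have [Qy0 Hw0] : Q (omega f y0) = 2 /\ (omega f y0 = 1 \/ omega f y0 = 4).
    apply: Q2 => //; lia.
  have H23 : {in Im f :\ y0, forall y, omega f y = 2 \/ omega f y = 3}.
    move=> y Hy; have := le_sum_in F _ (fun y => Q (omega f y)) y Hy.
    move=> Hle; have HQy : Q (omega f y) = 0 by lia.
    exact: Q0.
  have := sum23 F f _ H23 => HT.
  set T := [set y in Im f :\ y0 | omega f y == 2] in HT.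
  have memT : forall y, y \in Im f -> y != y0 -> omega f y = 2 -> y \in T.
    by move=> y Hy Hne H2; rewrite !inE Hne Hy H2 eqxx.
  have notT : forall y, y \in Im f -> y != y0 -> y \notin T -> omega f y = 3.
    move=> y Hy Hne HnT; have Hy' : y \in Im f :\ y0 by rewrite !inE Hne Hy.
    case: (H23 y Hy') => // H2; by rewrite (memT y Hy Hne H2) in HnT.
  have T2 : forall y, y \in T -> omega f y = 2 /\ y \in Im f /\ y != y0.
    by move=> y; rewrite !inE => /andP [/andP [-> ->] /eqP ->].
  case: Hw0 => Hw0.
    left; exists y0 => //; split => // y Hy Hne.
    apply: notT => //.
    have /eqP T0 : #|T| == 0 by apply/eqP; lia.
    by move: T0 => /cards0_eq ->; rewrite inE.
  right; right.
  have : 0 < #|T| by lia.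
  case/card_gt0P => y1 Hy1.
  have : #|T :\ y1| == 2 by apply/eqP; move: (cardsD1 y1 T); rewrite Hy1; lia.
  case/cards2P => y2 [y3 [Hne23 ET]].
  have Hy2 : y2 \in T :\ y1 by rewrite ET !inE eqxx.
  have Hy3 : y3 \in T :\ y1 by rewrite ET !inE eqxx orbT.
  move: Hy2 Hy3; rewrite !in_setD1 => /andP [Hne21 Hy2] /andP [Hne31 Hy3].
  have [W1 [I1 N1]] := T2 _ Hy1.
  have [W2 [I2 N2]] := T2 _ Hy2.
  have [W3 [I3 N3]] := T2 _ Hy3.
  exists y1, y2, y3, y0; split => //.
    rewrite /= !inE !negb_or Hne23 N1 N2 N3 !andbT /=.
    by rewrite eq_sym Hne21 eq_sym Hne31.
  move=> y Hy; rewrite !inE !negb_or.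
move=> /and4P [H1 H2 H3 H0].
  apply: notT => //.
  apply/negP => HyT.
  have : y \in T :\ y1 by rewrite in_setD1 H1 HyT.
  by rewrite ET !inE (negbTE H2) (negbTE H3).
have H23 : {in Im f, forall y, omega f y = 2 \/ omega f y = 3}.
  move=> y Hy; move: (Hno y); rewrite Hy /= => /negbFE/eqP HQy.
  exact: Q0.
have := sum23 F f _ H23; rewrite Hw -/k => HT.
right; left.
have : #|[set y in Im f | omega f y == 2]| == 2 by apply/eqP; lia.
case/cards2P => y0 [y1 [Hne ET]].
have : y0 \in [set y in Im f | omega f y == 2] by rewrite ET !inE eqxx.
have : y1 \in [set y in Im f | omega f y == 2] by rewrite ET !inE eqxx orbT.
rewrite !inE => /andP [Hy1 /eqP W1] /andP [Hy0 /eqP W0].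
exists y0, y1; split => // y Hy N0 N1.
case: (H23 y Hy) => // H2.
have : y \in [set y in Im f | omega f y == 2] by rewrite inE Hy H2 eqxx.
by rewrite ET !inE (negbTE N0) (negbTE N1).
Qed.
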